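(* If $w$ is an almost periodic infinite word over a finite alphabet $A$ and $H$ is a finite graph with loops allowed on vertex set $A$, then $\mathcal{P}(w,H)$ is a minimal hereditary property above the Bell number.
   Context: Graphs in classes are finite, simple and loopless; a property (class) is a set of graphs closed under isomorphism, hereditary if closed under induced subgraphs. The speed $\mathcal{X}_n$ is the number of graphs in $\mathcal{X}$ on vertex set $\{1,\dots,n\}$. A hereditary property is above the Bell number if $\mathcal{X}_n\ge n^{(1-o(1))n}$ (equivalently its speed is at least the Bell number $B_n$); it is a minimal property above the Bell number if it is above the Bell number and no proper hereditary subclass is above the Bell number. A word over $A$ is a map $w:S\to A$ with $S=\{1,\dots,n\}$ or $S=\mathbb{N}$, $w_i=w(i)$. A finite word $f$ is a factor of $w$ if for some $s\ge0$, $f_i=w_{i+s}$ for $1\le i\le|f|$. An infinite word $w$ is almost periodic if for every factor $f$ of $w$ there is $k_f$ such that every factor of $w$ of length at least $k_f$ contains $f$ as a factor. For $H$ with loops allowed on $A$ and positive integers $u_1<\dots<u_m$, $G_{w,H}(u_1,\dots,u_m)$ is the graph on $\{u_1,\dots,u_m\}$ where $u_iu_j$ is an edge iff either $|u_i-u_j|=1$ and $w_{u_i}w_{u_j}\notin E(H)$, or $|u_i-u_j|>1$ and $w_{u_i}w_{u_j}\in E(H)$ (equal letters $a$: this refers to a loop at $a$). $\mathcal{P}(w,H)$ is the class of all graphs isomorphic to some $G_{w,H}(u_1,\dots,u_m)$. *)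

(* Defs.v *)
From mathcomp Require Import all_boot all_fingroup.
From mathcomp Require Import boolp.
From Stdlib Require Import Reals.

Set Implicit Arguments.
Unset Strict Implicit.
Unset Printing Implicit Defensive.

Definition graph (n : nat) := {ffun 'I_n -> {ffun 'I_n -> bool}}.

Definition simple n (g : graph n) : Prop :=
  forall i j : 'I_n, g i j = g j i /\ g i i = false.

(* the graph induced (pulled back) along f : 'I_m -> 'I_n; for injective f this
   is the induced subgraph on the image of f, relabelled by f *)
Definition induced m n (f : 'I_m -> 'I_n) (g : graph n) : graph m :=
  [ffun i => [ffun j => g (f i) (f j)]].

Definition gclass := forall n : nat, graph n -> Prop.

Definition is_property (X : gclass) : Prop :=
  (forall n (g : graph n), X n g -> simple g) /\
  (forall n (s : {perm 'I_n}) (g : graph n), X n g -> X n (induced s g)).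

Definition hereditary (X : gclass) : Prop :=
  is_property X /\
  (forall m n (f : 'I_m -> 'I_n) (g : graph n),
      injective f -> X n g -> X m (induced f g)).

Definition speed (X : gclass) (n : nat) : nat :=
  #|[set g : graph n | `[< X n g >]]|.

Definition above_bell (X : gclass) : Prop :=
  forall eps : R, (0 < eps)%R ->
    exists N : nat, forall n : nat, (N <= n)%N ->
      (Rpower (INR n) ((1 - eps) * INR n) <= INR (speed X n))%R.

Definition subclass (Y X : gclass) : Prop := forall n (g : graph n), Y n g -> X n g.

Definition minimal_above_bell (X : gclass) : Prop :=
  hereditary X /\ above_bell X /\
  (forall Y : gclass, hereditary Y -> subclass Y X -> above_bell Y ->
     subclass X Y).

(* An infinite word is w : nat -> A, with letters w_1, w_2, ... ;
   the value w 0 is never used. *)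

Definition factor (A : Type) (w : nat -> A) (f : seq A) : Prop :=
  exists s : nat, f = mkseq (fun i => w (i.+1 + s)) (size f).

Definition almost_periodic (A : eqType) (w : nat -> A) : Prop :=
  forall f, factor w f ->
    exists k : nat, forall g, factor w g -> (k <= size g)%N -> infix f g.

(* G_{w,H}(u_1,...,u_m), vertex i of 'I_m standing for u_i *)
Definition GwH (A : Type) (w : nat -> A) (H : rel A) m (u : 'I_m -> nat) : graph m :=
  [ffun i => [ffun j =>
     (i != j) &&
     (if (u i == (u j).+1) || (u j == (u i).+1)
      then ~~ H (w (u i)) (w (u j))
      else H (w (u i)) (w (u j)))]].

Definition Pclass (A : Type) (w : nat -> A) (H : rel A) : gclass :=
  fun n g => exists u : 'I_n -> nat,
    (forall i, (0 < u i)%N) /\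
    (forall i j : 'I_n, (i < j)%N -> (u i < u j)%N) /\
    exists s : {perm 'I_n}, g = induced s (GwH w H u).

(* Main.v *)
Require Import Defs.
From Stdlib Require Import Reals Lra.
From mathcomp Require Import all_boot all_fingroup boolp.
From mathcomp Require Import zify.
Delimit Scope R_scope with R.
Set Implicit Arguments.
Unset Strict Implicit.
Unset Printing Implicit Defensive.

Section PartA.
Variables (A : finType) (w : nat -> A) (H : rel A).

Lemma induced_GwH m n (f : 'I_m -> 'I_n) (x : 'I_n -> nat) :
  injective f -> induced f (GwH w H x) = GwH w H (x \o f).
Proof.
move=> fi; apply/ffunP => i; apply/ffunP => j; rewrite /induced /GwH !ffunE /=.
by rewrite (inj_eq fi).
Qed.

Definition rankf n (x : 'I_n -> nat) (i : 'I_n) : nat := #|[set j | x j < x i]|.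

Lemma rankf_lt n (x : 'I_n -> nat) i : rankf x i < n.
Proof.
rewrite /rankf; apply: (@leq_trans #|[set: 'I_n]|); last by rewrite cardsT card_ord.
apply: proper_card; apply/properP; split; first exact: subsetT.
by exists i; rewrite ?inE ?ltnn.
Qed.

Lemma rankf_mono n (x : 'I_n -> nat) i j : x i < x j -> rankf x i < rankf x j.
Proof.
move=> lt; rewrite /rankf; apply: proper_card; apply/properP; split.
  by apply/subsetP => k; rewrite !inE => /ltn_trans; apply.
by exists i; rewrite ?inE ?ltnn.
Qed.

Lemma Pclass_char n g :
  Pclass w H g <-> exists x : 'I_n -> nat,
     [/\ injective x, (forall i, 0 < x i) & g = GwH w H x].
Proof.
split.
  case=> u [pos [incr [s ->]]]; exists (u \o s); split => //.
  - move=> i j /= e; apply: (@perm_inj _ s); apply/val_inj/eqP.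
    case: (ltngtP (s i) (s j)) => // h.
    + by have := incr _ _ h; rewrite e ltnn.
    + by have := incr _ _ h; rewrite e ltnn.
  - by move=> i; apply: pos.
  - by rewrite induced_GwH //; apply: perm_inj.
case=> x [xi pos ->].
have rl i : rankf x i < n by apply: rankf_lt.
pose r i := Ordinal (rl i).
have rmono i j : x i < x j -> r i < r j by apply: rankf_mono.
have rinj : injective r.
  move=> i j e; apply: xi; apply/eqP; case: (ltngtP (x i) (x j)) => // /rmono;
  by rewrite e ltnn.
pose s := perm rinj.
exists (x \o (s^-1)%g); split; [|split].
- by move=> i; apply: pos.
- move=> i j ij /=; case: (ltngtP (x ((s^-1)%g i)) (x ((s^-1)%g j))) => // h.
  + have se t : rankf x t = s t by rewrite permE.
    have := rmono _ _ h; rewrite /r /= !se.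
    by rewrite !permKV => /(ltn_trans ij); rewrite ltnn.
  + by move: h => /xi /(f_equal (fun t => s t)); rewrite !permKV => eij; move: ij; rewrite eij ltnn.
- exists s; rewrite induced_GwH; last exact: perm_inj.
  congr GwH; apply: funext => i /=; by rewrite permK.
Qed.


Lemma GwH_simple n (x : 'I_n -> nat) : symmetric H -> simple (GwH w H x).
Proof.
move=> Hs i j; rewrite /GwH !ffunE eqxx; split => //.
by rewrite eq_sym orbC Hs.
Qed.

Lemma Pclass_hered : symmetric H -> hereditary (Pclass w H).
Proof.
move=> Hs; split; first split.
- by move=> n g /Pclass_char [x [_ _ ->]]; apply: GwH_simple.
- move=> n s g /Pclass_char [x [xi pos ->]]; apply/Pclass_char.
  exists (x \o s); split; [by move=> i j /xi /perm_inj | by move=> i; apply: pos |].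
  by rewrite induced_GwH //; apply: perm_inj.
- move=> m n f g fi /Pclass_char [x [xi pos ->]]; apply/Pclass_char.
  exists (x \o f); split; [by move=> i j /xi /fi | by move=> i; apply: pos |].
  by rewrite induced_GwH.
Qed.


Lemma term_le_sum n (x : 'I_n -> nat) i : x i <= \sum_(j < n) x j.
Proof. by rewrite (bigD1 i) //= leq_addr. Qed.

Lemma speed_succ n : speed (Pclass w H) n <= speed (Pclass w H) n.+1.
Proof.
rewrite /speed.
pose restr (g : graph n.+1) : graph n := induced (widen_ord (leqnSn n)) g.
apply: (leq_trans _ (leq_imset_card restr _)).
apply: subset_leq_card; apply/subsetP => g; rewrite inE => /asboolP /Pclass_char [x [xi pos ->]].
pose big := (\sum_(j < n) x j).+1.
pose x' (i : 'I_n.+1) : nat := oapp x big (insub (val i)).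
have x'w j : x' (widen_ord (leqnSn n) j) = x j.
  rewrite /x' /= insubT /=; first exact: ltn_ord.
  by move=> h; f_equal; apply: val_inj.
have x'n (i : 'I_n.+1) : n <= i -> x' i = big.
  by move=> ni; rewrite /x' insubF //= ltnNge ni.
apply/imsetP; exists (GwH w H x').
  rewrite inE; apply/asboolP/Pclass_char; exists x'; split => //.
  - move=> i j; case: (ltnP i n) => hi; case: (ltnP j n) => hj.
    + rewrite -[i](@val_inj _ _ _ (widen_ord (leqnSn n) (Ordinal hi))) // -[j](@val_inj _ _ _ (widen_ord (leqnSn n) (Ordinal hj))) //.
      by rewrite !x'w => /xi ->.
    + rewrite -[i](@val_inj _ _ _ (widen_ord (leqnSn n) (Ordinal hi))) // x'w x'n // => e.
      by have := term_le_sum x (Ordinal hi); rewrite e ltnn.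
    + rewrite -[j](@val_inj _ _ _ (widen_ord (leqnSn n) (Ordinal hj))) // x'w x'n // => e.
      by have := term_le_sum x (Ordinal hj); rewrite -e ltnn.
    + move=> _; apply: val_inj => /=; have := ltn_ord i; have := ltn_ord j; lia.
  - move=> i; case: (ltnP i n) => hi; last by rewrite x'n.
    by rewrite -[i](@val_inj _ _ _ (widen_ord (leqnSn n) (Ordinal hi))) // x'w.
rewrite /restr induced_GwH; last by move=> i j /(f_equal val) /= /val_inj.
by congr GwH; apply: funext => j /=; rewrite x'w.
Qed.

Lemma speed_mono m n : m <= n -> speed (Pclass w H) m <= speed (Pclass w H) n.
Proof.
move/subnK => <-; elim: (n - m) => //= k IH.
by rewrite addSn; apply: leq_trans IH (speed_succ _).
Qed.

End PartA.

Lemma divmod_uniq d q1 r1 q2 r2 : r1 < d -> r2 < d ->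
  q1 * d + r1 = q2 * d + r2 -> q1 = q2 /\ r1 = r2.
Proof.
move=> h1 h2 e.
have d0 : 0 < d by apply: leq_ltn_trans h1.
have eq := f_equal (fun z => z %/ d) e; rewrite /= !divnMDl // !divn_small // !addn0 in eq.
by split => //; move: e; rewrite eq => /addnI.
Qed.


Section PartC.
Variables (A : finType) (w : nat -> A) (H : rel A).
Variables (L k : nat) (a : nat -> nat).
Hypothesis ak : forall j, a j + L.+2 <= k.
Hypothesis aw : forall j l, l < L.+2 -> w (j * k.+2 + (a j + l.+1)) = w l.+1.
Variable m : nat.

Definition V := ('I_L.+2 * 'I_m)%type.
Definition Gam := {ffun 'I_L.+1 -> {perm 'I_m}}.

Definition blk (g : Gam) (l : nat) (t : 'I_m) : 'I_m :=
  if l is l'.+1 then g (inord l') t else t.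

Definition posv (g : Gam) (v : V) : nat :=
  let b := val (blk g v.1 v.2) in b * k.+2 + (a b + (v.1).+1).

Lemma blk_inj g l : injective (blk g l).
Proof. by case: l => [|l] //= t t'; apply: perm_inj. Qed.

Lemma blk_surj g l t : exists t', blk g l t' = t.
Proof.
case: l => [|l] /=; first by exists t.
by exists ((g (inord l))^-1 t)%g; rewrite permKV.
Qed.

Lemma posv_rem g (v : V) : a (blk g v.1 v.2) + (v.1).+1 < k.+2.
Proof. have := ak (blk g v.1 v.2); have := ltn_ord v.1; lia. Qed.

Lemma posv_inj g : injective (posv g).
Proof.
move=> [l t] [l' t'] /= e.
have [e1 e2] := divmod_uniq (posv_rem g (l, t)) (posv_rem g (l', t')) e.
have el : l = l' by apply: val_inj; move: e2 => /=; rewrite e1 => /addnI [] .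
subst l'; congr pair; exact: (blk_inj (val_inj e1)).
Qed.

Lemma posv_succ g (v v' : V) :
  (posv g v' == (posv g v).+1) = (val v'.1 == (val v.1).+1) && (blk g v.1 v.2 == blk g v'.1 v'.2).
Proof.
case: v v' => [l t] [l' t'] /=; rewrite /posv /=.
set b := val (blk g l t); set b' := val (blk g l' t').
have r1 : (a b + l.+1).+1 < k.+2 by have := ak b; have := ltn_ord l; lia.
have r2 : a b' + l'.+1 < k.+2 by have := ak b'; have := ltn_ord l'; lia.
apply/eqP/andP.
  rewrite -addnS => /esym e; have [e1 e2] := divmod_uniq r1 r2 e.
  rewrite -e1 in e2; split; first by apply/eqP; lia.
  by apply/eqP/val_inj.
move=> [/eqP el /eqP eb]; rewrite -/b -/b' /b /b' eb el; lia.
Qed.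

Lemma posv_pos g v : 0 < posv g v.
Proof. rewrite /posv; lia. Qed.

Lemma posv_letter g (v : V) : w (posv g v) = w (val v.1).+1.
Proof. by rewrite /posv aw. Qed.

Definition xg (g : Gam) : 'I_#|{: V}| -> nat := fun i => posv g (enum_val i).

Definition Gg (g : Gam) : graph #|{: V}| := GwH w H (xg g).

Lemma Gg_inj : injective Gg.
Proof.
move=> g g' e.
have cons (l : 'I_L.+1) (t t' : 'I_m) :
    (blk g l t == blk g l.+1 t') = (blk g' l t == blk g' l.+1 t').
  pose v : V := (widen_ord (leqnSn _) l, t).
  pose v' : V := (lift ord0 l, t').
  have := f_equal (fun G : graph _ => G (enum_rank v) (enum_rank v')) e.
  rewrite /Gg /GwH !ffunE /xg !enum_rankK !posv_letter (inj_eq enum_rank_inj).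
  have vv : (v != v') by apply/negP => /eqP [] e1 _; move: e1; rewrite /bump /=; lia.
  rewrite vv /= !posv_succ /= /bump /= eqxx /=.
  have -> : (l == l.+2 :> nat) = false by lia.
  by rewrite /=; case: (_ == _); case: (_ == _); case: (H _ _).
have bl l : l < L.+2 -> forall t, blk g l t = blk g' l t.
  elim: l => [|l IH] hl t //.
  have [t0 ht0] := blk_surj g l (blk g l.+1 t).
  have hl' : l < L.+1 by lia.
  have := cons (Ordinal hl') t0 t; rewrite /= ht0 eqxx => /esym /eqP <-.
  by rewrite -[g (inord l) t]/(blk g l.+1 t) -ht0 IH //; lia.
apply/ffunP => l; apply/permP => t.
have := bl l.+1 (ltn_ord l : (l.+1 < L.+2)) t; rewrite /= !inord_val.
by [].
Qed.


Lemma speed_lb : (m`!) ^ (L.+1) <= speed (Pclass w H) (L.+2 * m).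
Proof.
have -> : L.+2 * m = #|{: V}| by rewrite card_prod !card_ord.
rewrite /speed.
have <- : #|[set Gg g | g in [set: Gam]]| = (m`!) ^ (L.+1).
  by rewrite card_imset; [rewrite cardsT card_ffun card_Sn card_ord | exact: Gg_inj].
apply: subset_leq_card; apply/subsetP => G /imsetP [g _ ->]; rewrite inE.
apply/asboolP/Pclass_char; exists (xg g); split => //.
- by move=> i j /posv_inj /enum_val_inj.
- by move=> i; apply: posv_pos.
Qed.

End PartC.

Lemma ap_blocks (A : finType) (w : nat -> A) : almost_periodic w -> forall L,
  exists k (a : nat -> nat), (forall j, a j + L.+2 <= k) /\
    (forall j l, l < L.+2 -> w (j * k.+2 + (a j + l.+1)) = w l.+1).
Proof.
move=> ap L.
pose f0 := mkseq (fun i => w (i.+1 + 0)) L.+2.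
have [k hk] : exists k, forall g, factor w g -> k <= size g -> infix f0 g.
  by apply: ap; exists 0; rewrite size_mkseq.
have sf0 : size f0 = L.+2 by rewrite size_mkseq.
pose gj j := mkseq (fun i => w (i.+1 + j * k.+2)) k.
have sg j' : size (gj j') = k by rewrite size_mkseq.
have inf j : infix f0 (gj j).
  by apply: hk; [exists (j * k.+2); rewrite size_mkseq | rewrite size_mkseq].
exists k, (fun j => infix_index f0 (gj j)); split.
  move=> j; have := inf j; rewrite infixE => /eqP e.
  have := f_equal size e; rewrite size_take size_drop size_mkseq ?sf0.
  by rewrite ?sg; case: ifP => ? ?; lia.
move=> j l hl; set a := infix_index f0 (gj j).
have := inf j; rewrite infixE => /eqP e.
have sz : a + L.+2 <= k.
  have := f_equal size e; rewrite size_take size_drop size_mkseq ?sf0.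
  by rewrite ?sg; case: ifP => ? ?; lia.
have := f_equal (fun s => nth (w 0) s l) e.
have gjn i : i < k -> nth (w 0) (gj j) i = w (i.+1 + j * k.+2) by move=> ?; rewrite nth_mkseq.
have f0n : nth (w 0) f0 l = w l.+1 by rewrite nth_mkseq // addn0.
rewrite nth_take ?sf0 // nth_drop -/a gjn ?f0n; last by lia.
move=> <-; congr w; lia.
Qed.

Section Analysis.
Local Open Scope R_scope.

Lemma exp_le_mono x y : x <= y -> exp x <= exp y.
Proof. by move=> h; case: (Rle_lt_or_eq_dec _ _ h) => [/exp_increasing|->]; lra. Qed.

Lemma ln_le_mono x y : 0 < x -> x <= y -> ln x <= ln y.
Proof. by move=> h0 h; case: (Rle_lt_or_eq_dec _ _ h) => [/(ln_increasing _ _ h0)|->]; lra. Qed.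

Lemma ln_le_id x : 0 < x -> ln x <= x - 1.
Proof. move=> h; have := exp_ineq1_le (ln x); rewrite exp_ln //; lra. Qed.

Lemma exp_pow_R x n : exp x ^ n = exp (INR n * x).
Proof.
elim: n => [|n IH]; first by rewrite /= Rmult_0_l exp_0.
rewrite [exp x ^ n.+1]/= IH S_INR -exp_plus; congr exp; lra.
Qed.

Lemma INR_pos (n : nat) : (0 < n)%N -> 0 < INR n.
Proof. by case: n => // n _; rewrite S_INR; have := pos_INR n; lra. Qed.

Lemma INR_expn (a e : nat) : INR (a ^ e) = INR a ^ e.
Proof. elim: e => [|e IH]; first by rewrite expn0. by rewrite expnS -multE mult_INR IH. Qed.

Lemma INR_leq m n : (m <= n)%N -> INR m <= INR n.
Proof. by move=> /leP; apply: le_INR. Qed.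

Lemma succ_pow_le m : INR m.+1 ^ m <= exp 1 * INR m ^ m.
Proof.
case: m => [|m]; first by have := exp_ineq1_le 1; rewrite /=; lra.
set x := INR m.+1.
have x0 : 0 < x by apply: INR_pos.
have e1 : INR m.+2 <= x * exp (/ x).
  have := exp_ineq1_le (/ x); rewrite [INR m.+2]S_INR -/x => h.
  have -> : x + 1 = x * (1 + / x) by field; lra.
  by apply: Rmult_le_compat_l; lra.
have := pow_incr (INR m.+2) (x * exp (/ x)) m.+1.
rewrite Rpow_mult_distr exp_pow_R -/x.
have -> : x * / x = 1 by field; lra.
move=> h; rewrite Rmult_comm; apply: h; split => //; have := pos_INR m.+2; lra.
Qed.

Lemma pow_le_exp_fact m : INR m ^ m <= exp (INR m) * INR (m`!).
Proof.
elim: m => [|m IH]; first by rewrite /= exp_0; lra.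
rewrite factS -multE mult_INR -tech_pow_Rmult.
have hp : 0 <= INR m.+1 := pos_INR _.
have h1 := succ_pow_le m.
have ee : exp (INR m.+1) = exp (INR m) * exp 1 by rewrite S_INR exp_plus.
rewrite ee.
have e0 := exp_pos 1.
have h2 := Rmult_le_compat_l _ _ _ hp h1.
have h3 := Rmult_le_compat_l (INR m.+1 * exp 1) _ _ (Rlt_le _ _ (Rmult_lt_0_compat _ _ (@INR_pos m.+1 (ltn0Sn m)) e0)) IH.
nra.
Qed.


Lemma key_ineq b x lx c eps y ly :
  2 <= b -> 2 < eps * b -> 1 <= x -> 0 <= c -> lx <= x ->
  (b - 1) + (b - 2) + 2 * (b - 2) * c <= lx ->
  0 <= y -> y <= b * (x + 1) -> 0 <= ly -> ly <= c + lx ->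
  (1 - eps) * (y * ly) <= (b - 1) * (x * lx - x).
Proof.
move=> hb he hx hc hlx hK hy hyb hly hlyc.
have p1 : 0 <= (b - 2) * (x - lx) by apply: Rmult_le_pos; lra.
have p2 : 0 <= (b - 2) * c * (x - 1) by apply: Rmult_le_pos; [apply: Rmult_le_pos|]; lra.
have p3 : 0 <= x * (lx - ((b - 1) + (b - 2) + 2 * (b - 2) * c)) by apply: Rmult_le_pos; lra.
have h1 : (b - 2) * ((x + 1) * (c + lx)) <= (b - 1) * (x * lx - x) by nra.
have t0 : 0 <= y * ly by apply: Rmult_le_pos.
have q1 : y * ly <= b * (x + 1) * ly by apply: Rmult_le_compat_r.
have q2 : b * (x + 1) * ly <= b * (x + 1) * (c + lx).
  by apply: Rmult_le_compat_l; [apply: Rmult_le_pos|]; lra.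
have h2 : y * ly <= b * (x + 1) * (c + lx) by lra.
have h3 : b * ((1 - eps) * (y * ly)) <= (b - 2) * (y * ly) by nra.
have h4 : (b - 2) * (y * ly) <= (b - 2) * (b * (x + 1) * (c + lx)) by apply: Rmult_le_compat_l; lra.
have h5 : b * ((1 - eps) * (y * ly)) <= b * ((b - 1) * (x * lx - x)).
  have e4 : (b - 2) * (b * (x + 1) * (c + lx)) = b * ((b - 2) * ((x + 1) * (c + lx))) by ring.
  rewrite e4 in h4.
  have := Rmult_le_compat_l b _ _ (ltac:(lra) : 0 <= b) h1; lra.
by apply: (Rmult_le_reg_l b) => //; lra.
Qed.


Lemma ln_fact_lb m : (0 < m)%N -> INR m * ln (INR m) - INR m <= ln (INR (m`!)).
Proof.
move=> m0; have x0 := @INR_pos m m0.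
have h := pow_le_exp_fact m.
have p0 : 0 < INR m ^ m by apply: pow_lt.
have f0 : 0 < INR (m`!) by apply: INR_pos; apply: fact_gt0.
have := ln_le_mono p0 h; rewrite ln_pow // ln_mult ?ln_exp //; [lra | apply: exp_pos].
Qed.

Lemma bell_lb (s : nat -> nat) :
  (forall L n, ((n %/ L.+2)`!) ^ L.+1 <= s n)%N ->
  forall eps, 0 < eps -> exists N, forall n, (N <= n)%N ->
    Rpower (INR n) ((1 - eps) * INR n) <= INR (s n).
Proof.
move=> hs eps he.
have [L hL] := INR_archimed eps 2 he.
set B := L.+2; set b := INR B.
have bL : b = INR L + 2 by rewrite /b /B !S_INR; lra.
have hb : 2 <= b by have := pos_INR L; lra.
have heb : 2 < eps * b by have := pos_INR L; nra.
set c := ln (2 * b).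
have hc : 0 <= c by rewrite /c -ln_1; apply: ln_le_mono; lra.
set K0 := (b - 1) + (b - 2) + 2 * (b - 2) * c.
have [M hM] := INR_archimed 1 (exp K0) Rlt_0_1.
exists (B * M)%N => n hn.
set m := (n %/ B)%N.
have hmM : (M <= m)%N by rewrite /m -(mulKn M (isT : (0 < B)%N)) leq_div2r.
set x := INR m.
have xM : exp K0 < x by have := INR_leq hmM; rewrite -/x; lra.
have x0 : 0 < x by have := exp_pos K0; lra.
have m0 : (0 < m)%N by rewrite lt0n; apply/eqP => e; move: x0; rewrite /x e /=; lra.
have hx : 1 <= x by have := INR_leq m0; rewrite -/x /=; lra.
set lx := ln x.
have hK : K0 <= lx by have := ln_increasing _ _ (exp_pos K0) xM; rewrite ln_exp /lx; lra.
have hlx : lx <= x by have := ln_le_id x0; rewrite /lx; lra.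
set y := INR n.
have nB : (n < m.+1 * B)%N by apply: ltn_ceil.
have hyb : y <= b * (x + 1).
  have := INR_leq (ltnW nB); rewrite -multE mult_INR S_INR /y /x /b; lra.
have n0 : (0 < n)%N by have := leq_div n B; rewrite -/m; move: m0; clear; lia.
have hy : 1 <= y by have := INR_leq n0; rewrite /y /=; lra.
set ly := ln y.
have hly : 0 <= ly by rewrite /ly -ln_1; apply: ln_le_mono; lra.
have hlyc : ly <= c + lx.
  have h2 : y <= (2 * b) * x by nra.
  have := ln_le_mono (ltac:(lra) : 0 < y) h2; rewrite ln_mult /ly /c /lx; lra.
have key := key_ineq hb heb hx hc hlx hK (ltac:(lra) : 0 <= y) hyb hly hlyc.
have fpos : (0 < m`!)%N := fact_gt0 m.
have Spos : (0 < (m`!) ^ L.+1)%N by rewrite expn_gt0 fpos.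
have hS : INR ((m`!) ^ L.+1) <= INR (s n) by apply: INR_leq; apply: hs.
have S0 : 0 < INR ((m`!) ^ L.+1) := INR_pos Spos.
have lnS : ln (INR ((m`!) ^ L.+1)) = (b - 1) * ln (INR (m`!)).
  rewrite INR_expn ln_pow; last by apply: INR_pos.
  by rewrite bL S_INR; ring.
have hf := ln_fact_lb m0.
have lsn : (b - 1) * (x * lx - x) <= ln (INR (s n)).
  apply: (Rle_trans _ (ln (INR ((m`!) ^ L.+1)))); last by apply: ln_le_mono.
  rewrite lnS; apply: Rmult_le_compat_l; [lra | by rewrite /x /lx].
rewrite /Rpower -(exp_ln (INR (s n))); last by lra.
apply: exp_le_mono; rewrite -/y -/ly; lra.
Qed.

End Analysis.

Fixpoint roff (P : pred nat) (p : nat) : nat :=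
  if p is p'.+1 then (if P p' then (roff P p').+1 else 0) else 0.

Lemma roff_le (P : pred nat) p : roff P p <= p.
Proof. by elim: p => //= p IH; case: (P p). Qed.

Lemma roff_in (P : pred nat) p t : t <= roff P p -> P p -> P (p - t).
Proof.
elim: p t => [|p IH] t /=; first by rewrite leqn0 => /eqP ->.
case Pp: (P p); last by rewrite leqn0 => /eqP -> ; rewrite subn0.
case: t => [|t]; first by rewrite subn0.
by rewrite ltnS subSS => h _; apply: IH.
Qed.

Lemma roff_start (P : pred nat) p : roff P (p - roff P p) = 0.
Proof.
elim: p => //= p IH; case Pp: (P p); first by rewrite subSS.
by rewrite subn0 /= Pp.
Qed.

Lemma roff_succ (P : pred nat) p : P p -> roff P p.+1 = (roff P p).+1.
Proof. by move=> /= ->. Qed.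

Lemma pexp_le (N a b : nat) : b <= a -> N ^ (N - a) <= N ^ (N - b).
Proof. case: N => [|N] h; first by rewrite !sub0n. by apply: leq_pexp2l => //; lia. Qed.

Section Count.
Variables (A : finType) (w : nat -> A) (H : rel A).
Variables (K n : nat).

Definition Px (x : 'I_n -> nat) : pred nat := fun q => [exists i, x i == q].

Definition Enc := ({ffun 'I_n -> A} * {ffun 'I_n -> 'I_K} * {ffun 'I_n -> 'I_n})%type.

Definition dec (e : Enc) : graph n :=
  [ffun i => [ffun j => (i != j) &&
     (if (e.2 i == e.2 j) && ((val (e.1.2 i) == (val (e.1.2 j)).+1) || (val (e.1.2 j) == (val (e.1.2 i)).+1))
      then ~~ H (e.1.1 i) (e.1.1 j) else H (e.1.1 i) (e.1.1 j))]].

Definition idem (f : {ffun 'I_n -> 'I_n}) := [forall i, f (f i) == f i].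

Definition Fset := [set f : {ffun 'I_n -> 'I_n} | idem f && (n <= K * #|[set f i | i in 'I_n]|)].

Definition Eset := [set e : Enc | e.2 \in Fset].

Section Encode.
Variable x : 'I_n -> nat.
Hypothesis xi : injective x.
Hypothesis hR : forall i, roff (Px x) (x i) < K.

Let P := Px x.
Let st i := x i - roff P (x i).

Lemma st_in i : P (st i).
Proof. by apply: roff_in => //; apply/existsP; exists i. Qed.

Definition root i : 'I_n := odflt i [pick j | x j == st i].

Lemma x_root i : x (root i) = st i.
Proof.
rewrite /root; case: pickP => [j /eqP //|].
move=> none; have := st_in i; rewrite /P /Px => /existsP [j hj].
by have := none j; rewrite hj.
Qed.

Lemma root_idem i : root (root i) = root i.
Proof.
apply: xi; rewrite !x_root /st x_root.
by rewrite -/(st i) /st roff_start subn0.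
Qed.

Lemma succ_char i j : (x j == (x i).+1) = (root i == root j) && (roff P (x j) == (roff P (x i)).+1).
Proof.
have Pi : P (x i) by apply/existsP; exists i.
have r1 := roff_le P (x i); have r2 := roff_le P (x j).
apply/eqP/andP.
  move=> e; have rs : roff P (x j) = (roff P (x i)).+1 by rewrite e roff_succ.
  split; last by rewrite rs.
  apply/eqP; apply: xi; rewrite !x_root /st rs e; lia.
move=> [/eqP er /eqP rs].
have := f_equal x er; rewrite !x_root /st rs; lia.
Qed.

Definition dfun i : 'I_K := Ordinal (hR i).

Definition encode : Enc := ([ffun i => w (x i)], [ffun i => dfun i], [ffun i => root i]).

Lemma encode_dec : dec encode = GwH w H x.
Proof.
apply/ffunP => i; apply/ffunP => j; rewrite /dec /GwH !ffunE /=.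
case: (i =P j) => //= _.
rewrite (succ_char j i) (succ_char i j) (eq_sym (root j)) /=.
by case: (root i == root j).
Qed.

Lemma encode_in : encode \in Eset.
Proof.
rewrite inE /Fset inE; apply/andP; split.
  by apply/forallP => i; rewrite !ffunE root_idem.
pose g (i : 'I_n) := (root i, dfun i).
have ginj : injective g.
  move=> i j [er ed]; apply: xi.
  have := f_equal x er; rewrite !x_root /st.
  rewrite -/P in ed; rewrite ed.
  have := roff_le P (x i); have := roff_le P (x j); lia.
have : #|[set g i | i in 'I_n]| <= #|setX [set ([ffun i => root i] : {ffun _ -> _}) i | i in 'I_n] [set: 'I_K]|.
  apply: subset_leq_card; apply/subsetP => p /imsetP [i _ ->].
  by rewrite inE /= in_setT andbT; apply/imsetP; exists i; rewrite ?ffunE.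
rewrite card_imset // cardsX cardsT !card_ord mulnC.
by [].
Qed.

End Encode.

Lemma idem_fix (f : {ffun 'I_n -> 'I_n}) i : idem f -> i \in [set f j | j in 'I_n] -> f i = i.
Proof. by move=> fid /imsetP [j _ ->]; apply/eqP; apply: (forallP fid). Qed.

Lemma card_Fset_part (R : {set 'I_n}) :
  #|[set f in Fset | [set f i | i in 'I_n] == R]| <= n ^ (n - #|R|).
Proof.
pose h (f : {ffun 'I_n -> 'I_n}) : {ffun {i : 'I_n | i \in ~: R} -> 'I_n} := [ffun i => f (val i)].
have hinj : {in [set f in Fset | [set f i | i in 'I_n] == R] &, injective h}.
  move=> f f'; rewrite !inE => /andP [/andP [fid _] /eqP fR] /andP [/andP [fid' _] /eqP fR'] e.
  apply/ffunP => i; case: (boolP (i \in R)) => iR.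
    rewrite (idem_fix fid) ?fR // (idem_fix fid') ?fR' //.
  have iC : i \in ~: R by rewrite inE.
  by have := congr1 (fun F : {ffun _ -> _} => F (exist _ i iC)) e; rewrite !ffunE.
rewrite -(card_in_imset hinj).
apply: (leq_trans (max_card _)).
rewrite card_ffun card_ord card_sig.
have -> : #|[pred x in ~: R]| = #|~: R| by apply: eq_card.
have := cardsC R; rewrite card_ord => e; have -> : #|~: R| = n - #|R| by lia.
by [].
Qed.


Lemma card_Fset : 0 < K -> #|Fset| <= 2 ^ n * n ^ (n - n %/ K).
Proof.
move=> K0.
rewrite -sum1_card (partition_big (fun f : {ffun 'I_n -> 'I_n} => [set f i | i in 'I_n]) predT) //=.
have cs : #|{: {set 'I_n}}| = 2 ^ n by rewrite -cardsT -powersetT card_powerset cardsT card_ord.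
rewrite -cs -sum_nat_const; apply: leq_sum => R _.
rewrite sum1_card.
have -> : #|[pred f | (f \in Fset) && ([set f i | i in 'I_n] == R)]| = #|[set f in Fset | [set f i | i in 'I_n] == R]|.
  by apply: eq_card => f; rewrite !inE.
case: (set_0Vmem [set f in Fset | [set f i | i in 'I_n] == R]) => [->|[f hf]].
  by rewrite cards0.
apply: (leq_trans (card_Fset_part R)).
move: hf; rewrite !inE => /andP [/andP [_ hK] /eqP fR]; rewrite fR in hK.
have : n %/ K <= #|R|.
  by apply: (leq_trans (leq_div2r K hK)); rewrite mulKn.
exact: pexp_le.
Qed.


Lemma count_ub (Y : gclass) : 0 < K ->
  (forall g : graph n, Y n g -> exists x : 'I_n -> nat,
     [/\ injective x, (forall i, roff (Px x) (x i) < K) & g = GwH w H x]) ->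
  speed Y n <= #|A| ^ n * K ^ n * (2 ^ n * n ^ (n - n %/ K)).
Proof.
move=> K0 hY; rewrite /speed.
apply: (@leq_trans #|[set dec e | e in Eset]|).
  apply: subset_leq_card; apply/subsetP => g; rewrite inE => /asboolP /hY [x [xi hR ->]].
  by apply/imsetP; exists (encode hR); [apply: encode_in | rewrite encode_dec].
apply: (leq_trans (leq_imset_card _ _)).
apply: (@leq_trans #|setX (setX [set: {ffun 'I_n -> A}] [set: {ffun 'I_n -> 'I_K}]) Fset|).
  apply: subset_leq_card; apply/subsetP => -[[a b] c]; rewrite !inE /=.
  by [].
rewrite !cardsX !cardsT !card_ffun !card_ord.
by apply: leq_mul => //; apply: card_Fset.
Qed.

End Count.

Lemma not_bell (s : nat -> nat) (C K : nat) : 0 < K ->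
  (forall n, s n <= C ^ n * n ^ (n - n %/ K)) ->
  ~ (forall eps : R, (0 < eps)%R -> exists N : nat, forall n : nat, N <= n ->
      (Rpower (INR n) ((1 - eps) * INR n) <= INR (s n))%R).
Proof.
move=> K0 hs ab.
have Kr : (0 < INR K)%R by apply: lt_0_INR; apply/ltP.
have [N hN] := ab (/ (2 * INR K))%R (ltac:(apply: Rinv_0_lt_compat; lra)).
set t := (maxn N (C ^ (2 * K))).+1.
set n := 2 * K * t.
have tN : N <= t by rewrite /t; lia.
have nt : t <= n by rewrite /n; nia.
have t0 : 0 < t by [].
have n0 : 0 < n by lia.
have hb := hN n (leq_trans tN nt).
have nr : INR n = (2 * INR K * INR t)%R by rewrite /n -!multE !mult_INR.
have ntr : INR (n - t) = (INR n - INR t)%R.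
  have : INR n = (INR (n - t) + INR t)%R by rewrite -plus_INR plusE subnK.
  lra.
have ex : ((1 - / (2 * INR K)) * INR n)%R = INR (n - t).
  by rewrite ntr nr; field; lra.
rewrite ex Rpower_pow in hb; last by apply: lt_0_INR; apply/ltP.
rewrite -INR_expn in hb.
have hle := INR_le _ _ hb; move/leP in hle.
have := leq_trans hle (hs n).
have -> : n %/ K = 2 * t by rewrite /n mulnAC mulnK.
have n2t : 2 * t <= n by rewrite /n mulnAC leq_pmulr.
have -> : n - t = (n - 2 * t) + t by lia.
rewrite expnD.
have -> : C ^ n = (C ^ (2 * K)) ^ t by rewrite /n expnM.
rewrite [n ^ (n - 2 * t) * _]mulnC leq_pmul2r; last by rewrite expn_gt0 n0.
rewrite leqNgt ltn_exp2r // => /negP; apply.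
by apply: (leq_trans _ nt); rewrite /t; lia.
Qed.

Lemma infix_shift (A : finType) (w : nat -> A) (L k j : nat) :
  infix (mkseq (fun i => w (i.+1 + 0)) L) (mkseq (fun i => w (i.+1 + j)) k) ->
  exists a, a + L <= k /\ forall l, l < L -> w (j + a + l.+1) = w l.+1.
Proof.
set f0 := mkseq _ L; set g := mkseq _ k => inf.
have sf0 : size f0 = L by rewrite size_mkseq.
have sg : size g = k by rewrite size_mkseq.
set a := infix_index f0 g.
have := inf; rewrite infixE -/a => /eqP e.
have sz : a + L <= k.
  have := f_equal size e; rewrite size_take size_drop ?sf0 ?sg.
  have ak : a <= k by rewrite -sg /a infixTindex.
  case: ifP => h1 h2; clear -h1 h2 ak; lia.
exists a; split => // l hl.
have := f_equal (fun s => nth (w 0) s l) e.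
have gn i : i < k -> nth (w 0) g i = w (i.+1 + j) by move=> ?; rewrite nth_mkseq.
have f0n : nth (w 0) f0 l = w l.+1 by rewrite nth_mkseq // addn0.
rewrite nth_take ?sf0 // nth_drop -/a gn ?f0n; last by lia.
move=> <-; congr w; lia.
Qed.

Section NoRuns.
Variables (A : finType) (w : nat -> A) (H : rel A).
Hypothesis ap : almost_periodic w.
Variable Y : gclass.
Hypothesis hY : hereditary Y.
Hypothesis sub : subclass Y (Pclass w H).
Variables (n0 : nat) (u0 : 'I_n0 -> nat).
Hypotheses (u0i : injective u0) (u0p : forall i, 0 < u0 i).
Hypothesis nY : ~ Y (GwH w H u0).

Lemma no_runs : exists K, 0 < K /\ forall m (h : graph m), Y h ->
  exists x : 'I_m -> nat, [/\ injective x, (forall i, roff (Px x) (x i) < K) & h = GwH w H x].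
Proof.
pose Lw := \sum_(i < n0) u0 i.
have uL i : u0 i <= Lw by apply: term_le_sum.
pose f0 := mkseq (fun i => w (i.+1 + 0)) Lw.
have [k hk] : exists k, forall g, factor w g -> k <= size g -> infix f0 g.
  by apply: ap; exists 0; rewrite size_mkseq.
exists k.+1; split => // m h Yh.
have [x [xi xp eh]] := (Pclass_char w H h).1 (sub Yh); subst h.
exists x; split => // i.
rewrite ltnNge; apply/negP => hr.
set P := Px x in hr; set p := x i in hr.
have pk : k.+1 <= p by apply: leq_trans hr (roff_le _ _).
set j0 := p - k.
have inf : infix f0 (mkseq (fun l => w (l.+1 + j0)) k).
  by apply: hk; [exists j0; rewrite size_mkseq | rewrite size_mkseq].
have [a [aL aw]] := infix_shift inf.
pose u' i' := j0 + a + u0 i'.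
have u'P i' : P (u' i').
  have -> : u' i' = p - (p - u' i').
    have := uL i'; rewrite /u' /j0; lia.
  apply: roff_in; last by apply/existsP; exists i.
  have := uL i'; have := u0p i'; rewrite /u' /j0; lia.
pose phi i' : 'I_m := odflt i [pick z | x z == u' i'].
have xphi i' : x (phi i') = u' i'.
  rewrite /phi; case: pickP => [z /eqP //|none].
  have := u'P i'; rewrite /P /Px => /existsP [z hz].
  by have := none z; rewrite hz.
have phii : injective phi.
  move=> i1 i2 e; have := f_equal x e; rewrite !xphi /u' => /addnI; exact: u0i.
apply: nY.
have -> : GwH w H u0 = induced phi (GwH w H x).
  rewrite induced_GwH //; apply/ffunP => i1; apply/ffunP => i2; rewrite /GwH !ffunE /= !xphi.
  have wl i' : w (u' i') = w (u0 i').
    have := aw (u0 i').-1; rewrite prednK ?u0p // => ->; last by have := uL i'; have := u0p i'; lia.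
    by rewrite /u'.
  rewrite !wl /u'.
  have -> : (j0 + a + u0 i1 == (j0 + a + u0 i2).+1) = (u0 i1 == (u0 i2).+1) by apply/eqP/eqP; lia.
  by have -> : (j0 + a + u0 i2 == (j0 + a + u0 i1).+1) = (u0 i2 == (u0 i1).+1) by apply/eqP/eqP; lia.
case: hY => _ hh; exact: hh _ _ _ _ phii Yh.
Qed.

End NoRuns.

Theorem theorem3p10 (A : finType) (w : nat -> A) (H : rel A) :
  symmetric H -> almost_periodic w -> minimal_above_bell (Pclass w H).
Proof.
move=> Hs ap; split; [exact: Pclass_hered | split].
- apply: bell_lb => L n.
  have [k [a [ak aw]]] := ap_blocks ap L.
  apply: (leq_trans (speed_lb H ak aw (n %/ L.+2))).
  by apply: speed_mono; rewrite mulnC; exact: leq_divM.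
- move=> Y hY sub ab n g Xg.
  case: (pselect (Y n g)) => // nY; exfalso.
  have [u0 [u0i u0p eg]] := (Pclass_char w H g).1 Xg; subst g.
  have [K [K0 hK]] := no_runs ap hY sub u0i u0p nY.
  apply: (@not_bell (speed Y) (#|A| * K * 2) K K0) => //.
  move=> m; have := @count_ub A w H K m Y K0 (hK m).
  by rewrite !expnMn mulnA.
Qed.
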